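(* Let $(X,\mu)$ be a measure space and $p>2$. For all non-zero functions $g,h\in L^p(X,\mu)$ (real or complex valued), $$\|g+h\|_p \leq \left( 1 - \frac{\|g\|_p\|h\|_p}{(\|g\|_p + \|h\|_p)^2} \left\Vert \frac{|g|^{p/2}}{\|g\|_p^{p/2}} - \frac{|h|^{p/2}}{\|h\|_p^{p/2}} \right\Vert_2^2 \right)^{1/p} (\|g\|_p + \|h\|_p).$$
   Context: $\|f\|_q := \left(\int |f|^q\,d\mu\right)^{1/q}$. *)

(* Defs.v *)
From HB Require Import structures.
From mathcomp Require Import all_boot all_order all_algebra.
From mathcomp Require Import all_classical all_reals all_analysis.
From mathcomp Require Import complex.

Set Implicit Arguments.
Unset Strict Implicit.
Unset Printing Implicit Defensive.

Import Order.TTheory GRing.Theory Num.Theory.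

Local Open Scope classical_set_scope.
Local Open Scope ring_scope.

Definition cmod (R : rcfType) (z : R[i]) : R :=
  Num.sqrt (complex.Re z ^+ 2 + complex.Im z ^+ 2).

(* ||f||_q = (\int |f|^q dmu)^(1/q), as a real number (the library's
   extended-real Lnorm, taken with fine; used only for functions where it is
   finite) *)
Definition Lpnorm d (T : measurableType d) (R : realType)
    (mu : {measure set T -> \bar R}) (q : R) (f : T -> R) : R :=
  fine ('N[mu]_(q%:E)[EFin \o f]).

Definition memLp d (T : measurableType d) (R : realType)
    (mu : {measure set T -> \bar R}) (q : R) (f : T -> R) : Prop :=
  measurable_fun [set: T] f /\ ('N[mu]_(q%:E)[EFin \o f] < +oo)%E.

Definition memLpC d (T : measurableType d) (R : realType)
    (mu : {measure set T -> \bar R}) (q : R) (f : T -> R[i]) : Prop :=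
  [/\ measurable_fun [set: T] (fun x => complex.Re (f x)),
      measurable_fun [set: T] (fun x => complex.Im (f x)) &
      ('N[mu]_(q%:E)[EFin \o (fun x => cmod (f x))] < +oo)%E].

Definition rhs_bound d (T : measurableType d) (R : realType)
    (mu : {measure set T -> \bar R}) (p : R) (G H : T -> R) : R :=
  let a := Lpnorm mu p G in
  let b := Lpnorm mu p H in
  (1 - a * b / (a + b) ^+ 2 *
     (Lpnorm mu 2 (fun x => G x `^ (p / 2) / a `^ (p / 2)
                            - H x `^ (p / 2) / b `^ (p / 2))) ^+ 2)
    `^ p^-1 * (a + b).

(* Main.v *)
Require Import Defs.
From HB Require Import structures.
From mathcomp Require Import all_boot all_order all_algebra.
From mathcomp Require Import all_classical all_reals all_analysis.
From mathcomp Require Import complex.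
From mathcomp Require Import measurable_realfun.
From mathcomp Require Import ring lra.
Import Order.TTheory GRing.Theory Num.Theory.
Local Open Scope classical_set_scope.
Local Open Scope ring_scope.

Local Open Scope convex_scope.
Lemma conv_pt (R : realType) (q l x y : R) : 1 <= q -> 0 <= l -> l <= 1 -> 0 <= x -> 0 <= y ->
  (l * x + (1 - l) * y) `^ q <= l * x `^ q + (1 - l) * y `^ q.
Proof.
move=> q1 l0 l1 x0 y0.
have := (@convex_powR R q q1 (Itv01 l0 l1) x y).
rewrite !inE /= !in_itv /= !andbT => /(_ x0 y0).
by rewrite !convRE.
Qed.
Local Close Scope convex_scope.

Lemma powR_div (R : realType) (x a q : R) : 0 <= x -> 0 < a ->
  (x / a) `^ q = x `^ q / a `^ q.
Proof.
move=> x0 a0.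
have aq : 0 < a `^ q by apply: powR_gt0.
apply: (@mulIf _ (a `^ q)); first by rewrite gt_eqF.
rewrite -powRM ?divfK ?gt_eqF //; last by apply: ltW.
by rewrite divr_ge0 // ltW.
Qed.

Lemma sq_powR (R : realType) (y p : R) : 0 <= y -> (y `^ (p / 2)) ^+ 2 = y `^ p.
Proof.
move=> y0; rewrite -powR_mulrn ?powR_ge0 // -powRrM.
by rewrite mulfVK // pnatr_eq0.
Qed.

Lemma split_fin (R : realType) (J K : \bar R) (c : R) : 0 < c -> (0 <= J)%E -> (0 <= K)%E ->
  (J + c%:E * K <= 1)%E -> exists j k, J = j%:E /\ K = k%:E.
Proof.
move=> c0; case: J => [j||] //; case: K => [k||] // _ _.
- by move=> _; exists j, k.
have c0' : (0 < c%:E)%E by rewrite (_ : 0%E = 0%:E) // lte_fin.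
- by rewrite muleC gt0_mulye // addey.
- by rewrite muleC gt0_mulye // addye.
Qed.

Lemma le_fin (R : realType) (x : \bar R) (M : R) : (0 <= x)%E -> (x <= M%:E)%E -> exists r, x = r%:E.
Proof. by case: x => [r||] // _ _; exists r. Qed.

Section core.
Context d (T : measurableType d) (R : realType) (mu : {measure set T -> \bar R}).

Lemma Lpnorm_props (G : T -> R) p : 0 < p -> measurable_fun setT G ->
  (forall x, 0 <= G x) ->
  ('N[mu]_(p%:E)[EFin \o G] < +oo)%E -> ~ {ae mu, forall x, G x = 0} ->
  0 < Lpnorm mu p G /\
  (\int[mu]_x ((G x `^ p)%:E) = ((Lpnorm mu p G) `^ p)%:E)%E.
Proof.
move=> p0 mG G0 Nfin Gn0.
have N0 : (0 <= 'N[mu]_(p%:E)[EFin \o G])%E by apply: Lnorm_ge0.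
have NE : ((Lpnorm mu p G)%:E = 'N[mu]_(p%:E)[EFin \o G])%E.
  by rewrite /Lpnorm fineK // ge0_fin_numE.
split.
  rewrite lt_neqAle fine_ge0 // andbT eq_sym; apply/negP => /eqP a0.
  apply: Gn0.
  have : (EFin \o G) = \0 %[ae mu].
    apply: (Lnorm_eq0_eq0 (p:=p%:E)); first by apply/measurable_EFinP.
      by rewrite (_ : 0%E = 0%:E)// lte_fin.
    by rewrite -NE a0.
  by apply: filterS => x /= /(_ I) [].
rewrite -poweR_EFin NE poweR_Lnorm ?gt_eqF //.
by apply: eq_integral => x _ /=; rewrite ger0_norm.
Qed.


Lemma Lpnorm_int (f : T -> R) q r : q != 0 ->
  (\int[mu]_x ((`|f x| `^ q)%:E) = r%:E)%E -> Lpnorm mu q f = r `^ q^-1.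
Proof.
move=> q0 Ir; rewrite /Lpnorm unlock /=.

by rewrite Ir poweR_EFin.
Qed.

Lemma mpow (f : T -> R) q : measurable_fun setT f -> measurable_fun setT (fun x => f x `^ q).
Proof. exact: (@measurableT_comp _ _ _ _ _ _ (@powR R ^~ q)). Qed.

Lemma mE (f : T -> R) : measurable_fun setT f -> measurable_fun setT (fun x => (f x)%:E).
Proof. by move=> mf; apply/measurable_EFinP. Qed.

End core.

Lemma cmod_triangle (R : rcfType) (x y : R[i]) : Num.sqrt (complex.Re (x+y) ^+ 2 + complex.Im (x+y) ^+ 2) <=
   Num.sqrt (complex.Re x ^+ 2 + complex.Im x ^+ 2) + Num.sqrt (complex.Re y ^+ 2 + complex.Im y ^+ 2).
Proof.
have := le_normcD x y.
by case: x => a b; case: y => c e.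
Qed.


Section core2.
Context d (T : measurableType d) (R : realType) (mu : {measure set T -> \bar R}).

Lemma core (F G H : T -> R) p : 2 < p ->
  measurable_fun setT F -> measurable_fun setT G -> measurable_fun setT H ->
  (forall x, 0 <= G x) -> (forall x, 0 <= H x) ->
  (forall x, `|F x| <= G x + H x) ->
  ('N[mu]_(p%:E)[EFin \o G] < +oo)%E -> ('N[mu]_(p%:E)[EFin \o H] < +oo)%E ->
  ~ {ae mu, forall x, G x = 0} -> ~ {ae mu, forall x, H x = 0} ->
  Lpnorm mu p F <= rhs_bound mu p G H.
Proof.
move=> p2 mF mG mH G0 H0 FGH Gfin Hfin Gn0 Hn0.
have p0 : 0 < p by apply: lt_trans p2.
have q1 : 1 <= p / 2 by rewrite ler_pdivlMr // mul1r ltW.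
have [a0 Ga] := @Lpnorm_props _ _ _ mu G p p0 mG G0 Gfin Gn0.
have [b0 Hb] := @Lpnorm_props _ _ _ mu H p p0 mH H0 Hfin Hn0.
rewrite /rhs_bound; cbv zeta.
set a := Lpnorm mu p G in a0 Ga *.
set b := Lpnorm mu p H in b0 Hb *.
set U := fun x => G x `^ (p / 2) / a `^ (p / 2).
set V := fun x => H x `^ (p / 2) / b `^ (p / 2).
pose S := a + b.
have S0 : 0 < S by rewrite /S addr_gt0.
pose l := a / S.
have l0 : 0 <= l by rewrite /l divr_ge0 // ltW.
have l1 : l <= 1 by rewrite /l ler_pdivrMr // mul1r /S lerDl ltW.
pose c := l * (1 - l).
have c0 : 0 < c.
  rewrite /c mulr_gt0 //; first by rewrite /l divr_gt0.
  by rewrite /l subr_gt0 ltr_pdivrMr // mul1r /S ltrDl.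
pose w := fun x => l * (G x / a) + (1 - l) * (H x / b).
have wE : forall x, w x = (G x + H x) / S.
  move=> x; rewrite /w /l /S; field.
  by rewrite !gt_eqF // addr_gt0.
have w0 : forall x, 0 <= w x.
  by move=> x; rewrite wE divr_ge0 // ?addr_ge0 // ltW.
have UE : forall x, U x = (G x / a) `^ (p / 2) by move=> x; rewrite powR_div.
have VE : forall x, V x = (H x / b) `^ (p / 2) by move=> x; rewrite powR_div.
have U0 : forall x, 0 <= U x by move=> x; rewrite UE powR_ge0.
have V0 : forall x, 0 <= V x by move=> x; rewrite VE powR_ge0.
have pt1 : forall x, `|F x| `^ p <= S `^ p * w x `^ p.
  move=> x; rewrite -powRM; [|exact: ltW|exact: w0].
  rewrite wE mulrC divfK ?gt_eqF //.
  apply: ge0_ler_powR; rewrite ?nnegrE ?addr_ge0 //; exact: ltW.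
have pt2 : forall x, w x `^ p + c * (U x - V x) ^+ 2 <= l * U x ^+ 2 + (1 - l) * V x ^+ 2.
  move=> x.
  have cv : w x `^ (p / 2) <= l * U x + (1 - l) * V x.
    rewrite UE VE; apply: conv_pt => //; apply: divr_ge0 => //; exact: ltW.
  rewrite -sq_powR //.
  have -> : l * U x ^+ 2 + (1 - l) * V x ^+ 2 = (l * U x + (1 - l) * V x) ^+ 2 + c * (U x - V x) ^+ 2.
    by rewrite /c; ring.
  rewrite lerD2r !expr2; apply: ler_pM => //; exact: powR_ge0.
have mU : measurable_fun setT U.
  rewrite /U; apply: measurable_funM; [exact: mpow | exact: measurable_cst].
have mV : measurable_fun setT V.
  rewrite /V; apply: measurable_funM; [exact: mpow | exact: measurable_cst].
have mw : measurable_fun setT w.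
  rewrite /w; apply: measurable_funD; apply: measurable_funM; try exact: measurable_cst;
    apply: measurable_funM => //; exact: measurable_cst.
have IU : (\int[mu]_x ((U x ^+ 2)%:E) = 1)%E.
  transitivity (\int[mu]_x (((a `^ p)^-1)%:E * (G x `^ p)%:E))%E.
    apply: eq_integral => x _; rewrite -EFinM /U expr_div_n.
    by rewrite (@sq_powR _ _ p (G0 x)) (@sq_powR _ _ p (ltW a0)) mulrC.
  rewrite ge0_integralZl_EFin //; first last.
  - by rewrite invr_ge0 powR_ge0.
  - exact/mE/mpow.
  - by move=> x _; rewrite lee_fin powR_ge0.
  by rewrite Ga -EFinM mulVf // gt_eqF // powR_gt0.
have IV : (\int[mu]_x ((V x ^+ 2)%:E) = 1)%E.
  transitivity (\int[mu]_x (((b `^ p)^-1)%:E * (H x `^ p)%:E))%E.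
    apply: eq_integral => x _; rewrite -EFinM /V expr_div_n.
    by rewrite (@sq_powR _ _ p (H0 x)) (@sq_powR _ _ p (ltW b0)) mulrC.
  rewrite ge0_integralZl_EFin //; first last.
  - by rewrite invr_ge0 powR_ge0.
  - exact/mE/mpow.
  - by move=> x _; rewrite lee_fin powR_ge0.
  by rewrite Hb -EFinM mulVf // gt_eqF // powR_gt0.
have I1 : (\int[mu]_x ((w x `^ p)%:E) + c%:E * \int[mu]_x (((U x - V x) ^+ 2)%:E) <= 1)%E.
  rewrite -ge0_integralZl_EFin //; first last.
  - exact: ltW.
  - by apply/mE/measurable_funX/measurable_funB.
  - by move=> x _; rewrite lee_fin sqr_ge0.
  rewrite -ge0_integralD //; first last.
  - apply: emeasurable_funM; first exact: measurable_cst.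
    by apply/mE/measurable_funX/measurable_funB.
  - by move=> x _; rewrite -EFinM lee_fin mulr_ge0 ?sqr_ge0 // ltW.
  - exact/mE/mpow.
  - by move=> x _; rewrite lee_fin powR_ge0.
  apply: (@le_trans _ _ (\int[mu]_x (l%:E * (U x ^+ 2)%:E + (1 - l)%:E * (V x ^+ 2)%:E))%E).
    apply: ge0_le_integral => //.
    - by move=> x _; rewrite -EFinM -EFinD lee_fin addr_ge0 ?powR_ge0 // mulr_ge0 ?sqr_ge0 // ltW.
    - apply/measurable_EFinP; apply: measurable_funD; first exact: mpow.
      apply: measurable_funM; first exact: measurable_cst.
      by apply/measurable_funX/measurable_funB.
    - apply/measurable_EFinP; apply: measurable_funD; apply: measurable_funM;
        (try exact: measurable_cst); exact: measurable_funX.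
    - by move=> x _; rewrite -!EFinM -!EFinD lee_fin; exact: pt2.
  rewrite ge0_integralD //; first last.
  - apply: emeasurable_funM; first exact: measurable_cst.
    exact/mE/measurable_funX.
  - by move=> x _; rewrite -EFinM lee_fin mulr_ge0 ?sqr_ge0 // subr_ge0.
  - apply: emeasurable_funM; first exact: measurable_cst.
    exact/mE/measurable_funX.
  - by move=> x _; rewrite -EFinM lee_fin mulr_ge0 ?sqr_ge0.
  rewrite !ge0_integralZl_EFin //; try (by move=> x _; rewrite lee_fin sqr_ge0);
    try (by rewrite subr_ge0); try (by apply/mE/measurable_funX).
  by rewrite IU IV -!EFinM -EFinD lee_fin !mulr1 addrC subrK.
have J0 : (0 <= \int[mu]_x ((w x `^ p)%:E))%E.
  by apply: integral_ge0 => x _; rewrite lee_fin powR_ge0.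
have K0 : (0 <= \int[mu]_x (((U x - V x) ^+ 2)%:E))%E.
  by apply: integral_ge0 => x _; rewrite lee_fin sqr_ge0.
have [j [k [Jj Kk]]] := @split_fin _ _ _ c c0 J0 K0 I1.
have I1' : j + c * k <= 1 by rewrite -lee_fin EFinD EFinM -Jj -Kk.
have j0 : 0 <= j by rewrite -lee_fin -Jj.
have k0 : 0 <= k by rewrite -lee_fin -Kk.
have IF : (\int[mu]_x ((`|F x| `^ p)%:E) <= (S `^ p * j)%:E)%E.
  rewrite EFinM -Jj -ge0_integralZl_EFin //; first last.
  - exact: powR_ge0.
  - exact/mE/mpow.
  - by move=> x _; rewrite lee_fin powR_ge0.
  apply: ge0_le_integral => //.
  - by apply/mE/mpow; apply: measurableT_comp => //; exact: normr_measurable.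
  - by apply: emeasurable_funM; [exact: measurable_cst | exact/mE/mpow].
  - by move=> x _; rewrite -EFinM lee_fin; exact: pt1.
have IF0 : (0 <= \int[mu]_x ((`|F x| `^ p)%:E))%E.
  by apply: integral_ge0 => x _; rewrite lee_fin powR_ge0.
have [r Ir] := @le_fin _ _ _ IF0 IF.
have IF' : r <= S `^ p * j by rewrite -lee_fin -Ir.
have r0 : 0 <= r by rewrite -lee_fin -Ir.
rewrite (@Lpnorm_int _ _ _ mu F p r (lt0r_neq0 p0) Ir).
have -> : Lpnorm mu 2 (fun x => U x - V x) = k `^ 2^-1.
  apply: Lpnorm_int => //; rewrite -Kk; apply: eq_integral => x _.
  by rewrite powR_mulrn // real_normK // num_real.
have -> : (k `^ 2^-1) ^+ 2 = k by rewrite -powR_mulrn ?powR_ge0 // -powRrM mulVf ?pnatr_eq0 // powRr1.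
have -> : a * b / (a + b) ^+ 2 = c by rewrite /c /l /S; field; rewrite gt_eqF // addr_gt0.
have e0 : 0 <= 1 - c * k by lra.
have Sp : 0 <= S `^ p by apply: powR_ge0.
apply: (@le_trans _ _ ((S `^ p * (1 - c * k)) `^ p^-1)).
  apply: ge0_ler_powR; rewrite ?nnegrE ?mulr_ge0 //; first by rewrite invr_ge0 ltW.
  by apply: (le_trans IF'); apply: ler_wpM2l => //; lra.
rewrite powRM // -powRrM mulfV ?gt_eqF // powRr1; last exact: ltW.
by rewrite mulrC.
Qed.

End core2.

Lemma Lnorm_absE d (T : measurableType d) (R : realType) (mu : {measure set T -> \bar R})
  (f : T -> R) q : 'N[mu]_q[EFin \o (fun x => `|f x|%R)]%E = 'N[mu]_q[EFin \o f]%E.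
Proof. by rewrite -[RHS]Lnorm_abse; apply: eq_Lnorm => x. Qed.

Lemma ReD (R : rcfType) (x y : R[i]) : complex.Re (x + y) = complex.Re x + complex.Re y.
Proof. by case: x; case: y. Qed.
Lemma ImD (R : rcfType) (x y : R[i]) : complex.Im (x + y) = complex.Im x + complex.Im y.
Proof. by case: x; case: y. Qed.

Lemma cmod0 (R : rcfType) (z : R[i]) : cmod z = 0 -> z = 0.
Proof.
rewrite /cmod; case: z => a b /= /eqP; rewrite sqrtr_eq0 le_eqVlt => /orP[|]; last first.
  by rewrite ltNge addr_ge0 ?sqr_ge0.
by rewrite paddr_eq0 ?sqr_ge0 ?expf_eq0 //= => /andP[/eqP -> /eqP ->].
Qed.

Lemma cmod_meas d (T : measurableType d) (R : realType) (g : T -> R[i]) :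
  measurable_fun setT (fun x => complex.Re (g x)) ->
  measurable_fun setT (fun x => complex.Im (g x)) ->
  measurable_fun setT (fun x => cmod (g x)).
Proof.
move=> mr mi.
have -> : (fun x => cmod (g x)) =
    (fun x => (complex.Re (g x) ^+ 2 + complex.Im (g x) ^+ 2) `^ 2^-1).
  apply/funext => x; rewrite /cmod powR12_sqrt //; exact: addr_ge0 (sqr_ge0 _) (sqr_ge0 _).
apply: mpow; apply: measurable_funD; exact: measurable_funX.
Qed.

Theorem theorem1p4 (d : measure_display) (T : measurableType d) (R : realType)
    (mu : {measure set T -> \bar R}) (p : R) :
  2 < p ->
  (forall g h : T -> R,
      memLp mu p g -> memLp mu p h ->
      ~ {ae mu, forall x, g x = 0} -> ~ {ae mu, forall x, h x = 0} ->
      Lpnorm mu p (fun x => g x + h x)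
        <= rhs_bound mu p (fun x => `|g x|) (fun x => `|h x|)) /\
  (forall g h : T -> R[i],
      memLpC mu p g -> memLpC mu p h ->
      ~ {ae mu, forall x, g x = 0} -> ~ {ae mu, forall x, h x = 0} ->
      Lpnorm mu p (fun x => cmod (g x + h x))
        <= rhs_bound mu p (fun x => cmod (g x)) (fun x => cmod (h x))).
Proof.
move=> p2; split.
  move=> g h [mg Ng] [mh Nh] g0 h0.
  have mG : measurable_fun setT (fun x => `|g x|).
    by apply: measurableT_comp => //; exact: normr_measurable.
  have mH : measurable_fun setT (fun x => `|h x|).
    by apply: measurableT_comp => //; exact: normr_measurable.
  apply: core => //.
  - exact: measurable_funD.
  - by move=> x; exact: ler_normD.
  - by rewrite Lnorm_absE.
  - by rewrite Lnorm_absE.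
  - by move=> H; apply: g0; apply: filterS H => x /eqP; rewrite normr_eq0 => /eqP.
  - by move=> H; apply: h0; apply: filterS H => x /eqP; rewrite normr_eq0 => /eqP.
move=> g h [rg ig Ng] [rh ih Nh] g0 h0.
apply: core => //.
- apply: cmod_meas.
  + by under eq_fun do rewrite ReD; exact: measurable_funD.
  + by under eq_fun do rewrite ImD; exact: measurable_funD.
- exact: cmod_meas.
- exact: cmod_meas.
- by move=> x; rewrite /cmod sqrtr_ge0.
- by move=> x; rewrite /cmod sqrtr_ge0.
- move=> x; rewrite ger0_norm; last by rewrite /cmod sqrtr_ge0.
  exact: cmod_triangle.
- by move=> H; apply: g0; apply: filterS H => x /cmod0.
- by move=> H; apply: h0; apply: filterS H => x /cmod0.
Qed.
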